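(* Let $\alpha = 1-\frac{1}{W_{-1}(-2/e^3)+1}\approx 1.3871$ (equivalently, $1-1/\alpha$ is the solution $x$ of $3+\ln(1/2)=\ln(x)+1/x$ used to define it). For $\epsilon>0$, let $\mathcal{S}_\epsilon=\{\ell = 1/2+i\epsilon : i\in\mathbb{N}_{>0},\ \ell\le 1/\alpha\}$, let $B\ge 1/\epsilon$ be an integer and $c>0$. Consider the linear program $(\mathrm{LP}_\epsilon)$ in variables $\alpha_\epsilon$, $N_0$ and $N_x$ ($x\in\mathcal{S}_\epsilon$): minimize $\alpha_\epsilon$ subject to $N_0+\sum_{x\in\mathcal{S}_\epsilon}(1-x)N_x\ge B-1/B^c$; $N_0+\sum_{x\in\mathcal{S}_\epsilon}N_x\le \alpha_\epsilon\cdot B$; $N_0+\sum_{x\in\mathcal{S}_\epsilon,\,x\le t-\epsilon}N_x+\lfloor \frac{B}{1-t}\rfloor\le \alpha_\epsilon\cdot\lceil\frac{B}{1-t}\rceil$ for all $t\in\mathcal{S}_\epsilon$; $N_x\ge 0$. Then the optimal value $\alpha^\star_\epsilon$ of $(\mathrm{LP}_\epsilon)$ satisfies $\alpha^\star_\epsilon\in[\alpha-O(\epsilon),\alpha+O(\epsilon)]$. *)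

(* Defs.v *)
From HB Require Import structures.
From mathcomp Require Import all_boot all_order all_algebra.
From mathcomp Require Import reals sequences exp.
Set Implicit Arguments. Unset Strict Implicit. Unset Printing Implicit Defensive.
Import Order.TTheory GRing.Theory Num.Theory.
Local Open Scope ring_scope.

Definition xpt (R : realType) (eps : R) (i : nat) : R := 1/2 + i%:R * eps.

Definition inS (R : realType) (al eps : R) (i : nat) : bool :=
  (0 < i)%N && (xpt eps i <= al^-1).

(* Feasibility of (LP_eps) at the point (a = alpha_eps, N0, N_x = N i for x = xpt eps i).
   Since every i with inS has i*eps < 1 <= B*eps, i.e. i < B, summing over
   i < B with the filter inS is summing over all of S_eps. *)
Definition LP_feasible (R : realType) (al eps : R) (B : nat) (c : R)
    (a N0 : R) (N : nat -> R) : Prop :=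
  [/\ B%:R - (B%:R `^ c)^-1 <= N0 + \sum_(i < B | inS al eps i) (1 - xpt eps i) * N i,
      N0 + \sum_(i < B | inS al eps i) N i <= a * B%:R,
      forall j : nat, inS al eps j ->
        N0 + \sum_(i < B | inS al eps i && (xpt eps i <= xpt eps j - eps)) N i
           + (Num.floor (B%:R / (1 - xpt eps j)))%:~R
        <= a * (Num.ceil (B%:R / (1 - xpt eps j)))%:~R,
      0 <= N0 &
      forall i : nat, inS al eps i -> 0 <= N i].

Definition LP_opt (R : realType) (al eps : R) (B : nat) (c : R) (v : R) : Prop :=
  (exists (N0 : R) (N : nat -> R), LP_feasible al eps B c v N0 N) /\
  (forall (a N0 : R) (N : nat -> R), LP_feasible al eps B c a N0 N -> v <= a).

(* Main.v *)
Require Import Defs.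
From mathcomp Require Import all_boot all_order all_algebra.
From mathcomp Require Import reals sequences exp.
From mathcomp Require Import classical_sets ring lra.
Import Order.TTheory GRing.Theory Num.Theory.
Local Open Scope ring_scope.

Fixpoint tmin {R : realType} (f : nat -> R) (b : R) (lo len : nat) : R :=
  match len with 0%N => b | l.+1 => Num.min (f lo) (tmin f b lo.+1 l) end.

Lemma tmin_le_b (R : realType) (f : nat -> R) b len lo : tmin f b lo len <= b.
Proof.
elim: len lo => [|l IH] lo /=; first by [].
by rewrite ge_min IH orbT.
Qed.

Lemma tmin_le (R : realType) (f : nat -> R) b len lo j :
  (lo <= j < lo + len)%N -> tmin f b lo len <= f j.
Proof.
elim: len lo => [|l IH] lo /=; first by rewrite addn0; case/andP=> h1 h2; move: (leq_trans h2 h1); rewrite ltnn.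
case/andP=> h1 h2; rewrite ge_min; case: (ltngtP lo j) => hj.
- by rewrite IH ?orbT // hj /= addSnnS.
- by move: h1; rewrite leqNgt hj.
- by rewrite hj lexx.
Qed.

Lemma tmin_glb (R : realType) (f : nat -> R) b len lo p :
  p <= b -> (forall j, (lo <= j < lo + len)%N -> p <= f j) -> p <= tmin f b lo len.
Proof.
move=> hb; elim: len lo => [|l IH] lo hf /=; first by [].
rewrite le_min hf ?leqnn ?addnS ?ltnS ?leq_addr //= IH // => j /andP[h1 h2].
by apply: hf; rewrite (ltnW h1) /= -addSnnS.
Qed.

Lemma abel (R : realType) (wt n : nat -> R) K :
  \sum_(0 <= k < K.+1) wt k * n k =
  \sum_(0 <= k < K) (\sum_(0 <= i < k.+1) n i) * (wt k - wt k.+1)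
  + (\sum_(0 <= i < K.+1) n i) * wt K.
Proof.
elim: K => [|K IH]; first by rewrite !big_nat1 big_geq // add0r mulrC.
rewrite big_nat_recr //= IH [in RHS]big_nat_recr //= [in X in _ = _ + X]big_nat_recr //=.
ring.
Qed.

Lemma sum_range (R : realType) (P : pred nat) (F : nat -> R) B lo hi :
  (hi <= B)%N -> (forall i, P i = (lo <= i < hi)%N) ->
  \sum_(i < B | P i) F i = \sum_(lo <= i < hi) F i.
Proof.
move=> hB hP.
rewrite (eq_bigl (fun i : 'I_B => (lo <= i < hi)%N)); last by move=> i; rewrite hP.
rewrite -(big_mkord (fun i => (lo <= i < hi)%N)).
rewrite [RHS](big_nat_widenl _ 0) // [RHS](big_nat_widen _ _ B) //.
Qed.

Lemma xpt_le (R : realType) (eps : R) i j : 0 < eps ->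
  (xpt eps i <= xpt eps j - eps) = (i < j)%N.
Proof.
move=> he; rewrite /xpt -addrA lerD2l lerBrDr.
have -> : i%:R * eps + eps = (i.+1)%:R * eps by rewrite -natr1 mulrDl mul1r.
by rewrite ler_pM2r // ler_nat.
Qed.

Set Implicit Arguments. Unset Strict Implicit. Unset Printing Implicit Defensive.

Definition wt (R : realType) (eps : R) (k : nat) : R :=
  if k == 0%N then 1 else 1 - xpt eps k.
Definition zz (R : realType) (eps : R) (B : nat) (j : nat) : R :=
  B%:R / (1 - xpt eps j).
Definition UU (R : realType) (eps : R) (B : nat) (a : R) (j : nat) : R :=
  a * (Num.ceil (zz eps B j))%:~R - (Num.floor (zz eps B j))%:~R.
Definition MM (R : realType) (eps : R) (B K : nat) (a : R) (k : nat) : R :=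
  tmin (UU eps B a) (a * B%:R) k.+1 (K - k).
Definition HH (R : realType) (eps : R) (B K : nat) (a : R) : R :=
  \sum_(0 <= k < K) MM eps B K a k * (wt eps k - wt eps k.+1)
  + a * B%:R * wt eps K.
Definition TT (R : realType) (B : nat) (c : R) : R := B%:R - (B%:R `^ c)^-1.
Definition cond (R : realType) (eps : R) (B K : nat) (c a : R) : Prop :=
  0 <= MM eps B K a 0 /\ TT B c <= HH eps B K a.

Lemma MM_le_U (R : realType) (eps : R) B K a k j :
  (k < j <= K)%N -> MM eps B K a k <= UU eps B a j.
Proof.
case/andP=> h1 h2; apply: tmin_le; rewrite h1 /=.
by rewrite addSn ltnS subnKC // ltnW // (leq_trans h1 h2).
Qed.

Lemma MM_le_b (R : realType) (eps : R) B K a k : MM eps B K a k <= a * B%:R.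
Proof. exact: tmin_le_b. Qed.

Lemma MM_glb (R : realType) (eps : R) B K a k p : (k <= K)%N ->
  p <= a * B%:R -> (forall j, (k < j <= K)%N -> p <= UU eps B a j) ->
  p <= MM eps B K a k.
Proof.
move=> hk hb hj; apply: tmin_glb => // j /andP[h1 h2]; apply: hj.
by rewrite h1 /= -ltnS -(subnKC hk) -addSn.
Qed.

Lemma MM_K (R : realType) (eps : R) B K a : MM eps B K a K = a * B%:R.
Proof. by rewrite /MM subnn. Qed.

Lemma MM_mono (R : realType) (eps : R) B K a k : (k < K)%N ->
  MM eps B K a k <= MM eps B K a k.+1.
Proof.
move=> hk; apply: MM_glb => //; first exact: MM_le_b.
move=> j /andP[h1 h2]; apply: MM_le_U.
by rewrite h2 andbT (ltn_trans _ h1).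
Qed.

Lemma obj_split (R : realType) (eps : R) (N0 : R) (N : nat -> R) K :
  N0 + \sum_(1 <= i < K.+1) (1 - xpt eps i) * N i =
  \sum_(0 <= k < K.+1) wt eps k * (if k == 0%N then N0 else N k).
Proof.
rewrite [RHS]big_nat_recl //= mul1r; congr (_ + _).
by rewrite big_add1 /=.
Qed.

Lemma pre_split (R : realType) (N0 : R) (N : nat -> R) K :
  N0 + \sum_(1 <= i < K.+1) N i =
  \sum_(0 <= k < K.+1) (if k == 0%N then N0 else N k).
Proof.
rewrite [RHS]big_nat_recl //=; congr (_ + _).
by rewrite big_add1 /=.
Qed.

Lemma dwt_ge0 (R : realType) (eps : R) k : 0 < eps -> 0 <= wt eps k - wt eps k.+1.
Proof.
move=> he; rewrite /wt /=; case: eqP => _.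
  rewrite opprB addrCA subrr addr0 /xpt.
  by apply: addr_ge0; [rewrite divr_ge0 | rewrite mulr_ge0 // ltW].
rewrite (_ : 1 - xpt eps k - (1 - xpt eps k.+1) = eps) ?ltW //.
by rewrite /xpt -natr1; ring.
Qed.

Lemma wt_ge0 (R : realType) (eps : R) K : xpt eps K <= 1 -> 0 <= wt eps K.
Proof. by move=> h; rewrite /wt; case: eqP => _ //; rewrite subr_ge0. Qed.

Lemma feas_cond (R : realType) (al eps : R) B K c a N0 (N : nat -> R) :
  0 < eps -> (forall i, inS al eps i = (0 < i <= K)%N) -> (K < B)%N ->
  xpt eps K <= 1 ->
  LP_feasible al eps B c a N0 N -> cond eps B K c a.
Proof.
move=> he hS hKB hx1 [h1 h2 h3 h4 h5].
pose n := fun k => if k == 0%N then N0 else N k.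
have hn : forall k, (k <= K)%N -> 0 <= n k.
  move=> [|k] hk; rewrite /n //=; apply: h5; by rewrite hS.
pose P := fun k => \sum_(0 <= i < k.+1) n i.
have sumS : forall F : nat -> R,
    \sum_(i < B | inS al eps i) F i = \sum_(1 <= i < K.+1) F i.
  by move=> F; apply: sum_range => // i; rewrite hS ltnS.
have hPj : forall j, (0 < j <= K)%N ->
    N0 + \sum_(i < B | inS al eps i && (xpt eps i <= xpt eps j - eps)) N i
    = P j.-1.
  move=> j /andP[hj0 hjK]; rewrite (@sum_range _ (fun i => inS al eps i && (xpt eps i <= xpt eps j - eps)) N B 1 j).
  - by rewrite -{1}(prednK hj0) pre_split.
  - exact: ltnW (leq_ltn_trans hjK hKB).
  - move=> i; rewrite hS xpt_le //; case: (ltnP i j) => hij; rewrite ?andbT ?andbF //.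
    by rewrite (leq_trans (ltnW hij) hjK) andbT.
have hPK : N0 + \sum_(i < B | inS al eps i) N i = P K by rewrite sumS /P pre_split.
have Pmono : forall k j, (k <= j <= K)%N -> P k <= P j.
  move=> k j /andP[hkj hjK]; rewrite /P [X in _ <= X](@big_cat_nat _ _ _ k.+1) //= ?ltnS //.
  rewrite lerDl big_nat_cond; apply: sumr_ge0 => i /andP[/andP[_ hi] _].
  by apply: hn; rewrite -ltnS (leq_trans hi) // ltnS.
have PleM : forall k, (k <= K)%N -> P k <= MM eps B K a k.
  move=> k hk; apply: MM_glb => //.
  - by apply: le_trans (Pmono k K _) _; [rewrite hk leqnn | rewrite -hPK].
  - move=> j /andP[hkj hjK].
    have hj0 : (0 < j <= K)%N by rewrite hjK andbT (leq_ltn_trans _ hkj).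
    have := h3 j; rewrite hS hj0 => /(_ isT); rewrite hPj // => h.
    rewrite /UU lerBrDr; apply: le_trans h; rewrite lerD2r.
    by apply: Pmono; rewrite -ltnS (prednK (leq_ltn_trans _ hkj)) // hkj /= (leq_trans (leq_pred _) hjK).
split.
- apply: le_trans (PleM 0%N _) => //; by rewrite /P big_nat1 /n /=.
- apply: le_trans h1 _; rewrite (sumS (fun i => (1 - xpt eps i) * N i)) obj_split abel /HH lerD //.
  + apply: ler_sum_nat => k /andP[_ hk]; apply: ler_wpM2r; first exact: dwt_ge0.
    exact: PleM (ltnW hk).
  + apply: ler_wpM2r; first exact: wt_ge0.
    by move: h2; rewrite hPK /P /n.
Qed.

Lemma cond_feas (R : realType) (al eps : R) B K c a :
  0 < eps -> (forall i, inS al eps i = (0 < i <= K)%N) -> (K < B)%N ->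
  cond eps B K c a ->
  exists N0 (N : nat -> R), LP_feasible al eps B c a N0 N.
Proof.
move=> he hS hKB [hc1 hc2].
pose M := MM eps B K a.
exists (M 0%N), (fun i => M i - M i.-1).
pose n := fun k => if k == 0%N then M 0%N else M k - M k.-1.
have MK : M K = a * B%:R by exact: MM_K.
have key : forall k, \sum_(0 <= i < k.+1) n i = M k.
  elim=> [|k IH]; first by rewrite big_nat1.
  by rewrite big_nat_recr //= IH /n /= addrC subrK.
have sumS : forall F : nat -> R,
    \sum_(i < B | inS al eps i) F i = \sum_(1 <= i < K.+1) F i.
  by move=> F; apply: sum_range => // i; rewrite hS ltnS.
have hPj : forall j, (0 < j <= K)%N ->
    M 0%N + \sum_(i < B | inS al eps i && (xpt eps i <= xpt eps j - eps))
       (M i - M i.-1) = M j.-1.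
  move=> j /andP[hj0 hjK].
  rewrite (@sum_range _ (fun i => inS al eps i && (xpt eps i <= xpt eps j - eps)) (fun i => M i - M i.-1) B 1 j).
  - by rewrite -{1}(prednK hj0) pre_split -/n key.
  - exact: ltnW (leq_ltn_trans hjK hKB).
  - move=> i; rewrite hS xpt_le //; case: (ltnP i j) => hij; rewrite ?andbT ?andbF //.
    by rewrite (leq_trans (ltnW hij) hjK) andbT.
split.
- apply: le_trans hc2 _; rewrite (sumS (fun i => (1 - xpt eps i) * (M i - M i.-1))).
  rewrite obj_split abel -/n key /HH MK.
  apply: lerD => //; apply: ler_sum_nat => k _; by rewrite key.
- by rewrite (sumS (fun i => M i - M i.-1)) pre_split -/n key MK.
- move=> j hj; rewrite hPj -?hS // -lerBrDr.
  apply: MM_le_U; move: hj; rewrite hS => /andP[hj0 hjK].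
  by rewrite prednK // leqnn hjK.
- exact: hc1.
- move=> i; rewrite hS => /andP[hi0 hiK]; rewrite subr_ge0.
  have := @MM_mono _ eps B K a i.-1; rewrite prednK //; apply.
  by rewrite (leq_trans _ hiK) // prednK.
Qed.

Lemma MM_lip (R : realType) (eps : R) B K (S a a' : R) k : (k <= K)%N ->
  a <= a' -> B%:R <= S ->
  (forall j, (0 < j <= K)%N -> (Num.ceil (zz eps B j))%:~R <= S) ->
  MM eps B K a' k - S * (a' - a) <= MM eps B K a k.
Proof.
move=> hk haa hB hC; apply: MM_glb => //.
  have := MM_le_b eps B K a' k; nra.
move=> j hj; have := MM_le_U eps B a' hj.
have hj0 : (0 < j <= K)%N by case/andP: hj => h1 h2; rewrite h2 andbT (leq_ltn_trans _ h1).
have := hC j hj0; rewrite /UU; nra.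
Qed.

Lemma tel_wt (R : realType) (eps : R) K :
  \sum_(0 <= k < K) (wt eps k - wt eps k.+1) = 1 - wt eps K.
Proof.
rewrite (@telescope_sumr_eq _ 0%N K (fun k => - wt eps k)) //=; last by move=> k _; ring.
by rewrite /wt /=; ring.
Qed.

Lemma HH_lip (R : realType) (eps : R) B K (S a a' : R) : 0 < eps ->
  xpt eps K <= 1 -> a <= a' -> B%:R <= S ->
  (forall j, (0 < j <= K)%N -> (Num.ceil (zz eps B j))%:~R <= S) ->
  HH eps B K a' - S * (a' - a) <= HH eps B K a.
Proof.
move=> he hx haa hB hC.
have -> : HH eps B K a' - S * (a' - a) =
   \sum_(0 <= k < K) (MM eps B K a' k - S * (a' - a)) * (wt eps k - wt eps k.+1)
   + (a' * B%:R - S * (a' - a)) * wt eps K.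
  under [in RHS]eq_bigr do rewrite mulrBl.
  rewrite sumrB -mulr_sumr tel_wt /HH; ring.
rewrite /HH lerD //.
  apply: ler_sum_nat => k /andP[_ hk]; apply: ler_wpM2r; first exact: dwt_ge0.
  exact: MM_lip (ltnW hk) haa hB hC.
apply: ler_wpM2r; first exact: wt_ge0.
nra.
Qed.

Lemma attain (R : realType) (al eps : R) B K c (S : R) : 0 < eps ->
  (forall i, inS al eps i = (0 < i <= K)%N) -> (K < B)%N ->
  xpt eps K <= 1 -> 0 < S -> B%:R <= S ->
  (forall j, (0 < j <= K)%N -> (Num.ceil (zz eps B j))%:~R <= S) ->
  (exists a0, cond eps B K c a0) ->
  exists v, LP_opt al eps B c v /\ (forall a, cond eps B K c a -> v <= a).
Proof.
move=> he hS hKB hx hS0 hBS hC [a0 ha0].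
pose E := fun a => cond eps B K c a.
have hB0 : (0 : R) < B%:R by rewrite ltr0n (leq_ltn_trans _ hKB).
have lb : forall a, E a -> 0 <= a.
  move=> a [h1 _]; have := MM_le_b eps B K a 0%N.
  move=> h2; have := le_trans h1 h2; rewrite pmulr_lge0 //.
have hlb : has_lbound E by exists 0 => a /lb.
have hinf : has_inf E by split => //; exists a0.
pose v := inf E.
have vlb : forall a, E a -> v <= a by move=> a Ea; exact: ge_inf.
have approx : forall e, 0 < e -> exists a, [/\ E a, v <= a & S * (a - v) <= e].
  move=> e he'; have [a Ea hae] := inf_adherent (divr_gt0 he' hS0) hinf.
  exists a; split => //; first exact: vlb.
  rewrite -ler_pdivlMl // mulrC; rewrite -/v in hae; lra.
have cv : cond eps B K c v.
  split.
  - apply/ler_addgt0Pr => e he'; have [a [[Ea1 _] va hSa]] := approx e he'.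
    have := @MM_lip _ eps B K S v a 0%N (leq0n _) va hBS hC; lra.
  - apply/ler_addgt0Pr => e he'; have [a [[_ Ea2] va hSa]] := approx e he'.
    have := @HH_lip _ eps B K S v a he hx va hBS hC; lra.
exists v; split => //; split.
  exact: cond_feas.
by move=> a N0 N hf; apply: vlb; exact: feas_cond hf.
Qed.

Lemma ln_le_sub1 (R : realType) (z : R) : 0 < z -> ln z <= z - 1.
Proof.
move=> hz; have := expR_ge1Dx (ln z); rewrite lnK ?posrE //; lra.
Qed.

Lemma ln_sub_le (R : realType) (u v : R) : 0 < u -> 0 < v -> ln u - ln v <= u / v - 1.
Proof.
move=> hu hv; rewrite -ln_div ?posrE //; apply: ln_le_sub1; exact: divr_gt0.
Qed.

Lemma ln_sub_ge (R : realType) (u v : R) : 0 < u -> 0 < v -> 1 - v / u <= ln u - ln v.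
Proof. move=> hu hv; have := ln_sub_le hv hu; lra. Qed.

Lemma dwt_eq (R : realType) (eps : R) k :
  wt eps k - wt eps k.+1 = if k == 0%N then xpt eps 1 else eps.
Proof.
rewrite /wt /=; case: eqP => [->|_] /=; first by ring.
by rewrite /xpt -natr1; ring.
Qed.

Definition QQ (R : realType) (eps : R) (K : nat) : R :=
  \sum_(0 <= k < K) (wt eps k - wt eps k.+1) / (1 - xpt eps k.+1).

Lemma xpt_mono (R : realType) (eps : R) i j : 0 <= eps -> (i <= j)%N -> xpt eps i <= xpt eps j.
Proof. by move=> he hij; rewrite /xpt lerD2l ler_wpM2r // ler_nat. Qed.

Lemma xptS (R : realType) (eps : R) i : xpt eps i.+1 = xpt eps i + eps.
Proof. by rewrite /xpt -natr1; ring. Qed.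

Lemma Qlo (R : realType) (eps : R) k : 0 < eps -> xpt eps k.+1 < 1 ->
  xpt eps 1 / (1 - xpt eps 1) + ln (1 - xpt eps 1) - ln (1 - xpt eps k.+1)
  <= QQ eps k.+1.
Proof.
move=> he; elim: k => [|k IH] hx.
  by rewrite /QQ big_nat1 dwt_eq /=; lra.
have hx1 : xpt eps k.+1 < 1 by apply: le_lt_trans hx; apply: xpt_mono; [exact: ltW|].
rewrite /QQ big_nat_recr //= -/(QQ eps k.+1) dwt_eq /=.
have := IH hx1.
have := @ln_sub_le _ (1 - xpt eps k.+1) (1 - xpt eps k.+2).
rewrite subr_gt0 hx1 subr_gt0 hx => /(_ isT isT).
rewrite (xptS eps k.+1).
have hd : 0 < 1 - (xpt eps k.+1 + eps) by rewrite -xptS subr_gt0.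
have -> : (1 - xpt eps k.+1) / (1 - (xpt eps k.+1 + eps)) - 1 = eps / (1 - (xpt eps k.+1 + eps)).
  by field; lra.
lra.
Qed.

Lemma Qup (R : realType) (eps : R) k : 0 < eps -> xpt eps k.+2 < 1 ->
  QQ eps k.+1 <=
  xpt eps 1 / (1 - xpt eps 1) + ln (1 - xpt eps 1) - ln (1 - xpt eps k.+2).
Proof.
move=> he; elim: k => [|k IH] hx.
  rewrite /QQ big_nat1 dwt_eq /=.
  have : ln (1 - xpt eps 2) <= ln (1 - xpt eps 1).
    rewrite ler_ln ?posrE ?subr_gt0 //; last first.
      by apply: le_lt_trans hx; apply: xpt_mono; [exact: ltW|].
    by rewrite lerD2l lerN2 xpt_mono // ltW.
  lra.
have hx1 : xpt eps k.+2 < 1 by apply: le_lt_trans hx; apply: xpt_mono; [exact: ltW|].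
rewrite /QQ big_nat_recr //= -/(QQ eps k.+1) dwt_eq /=.
have := IH hx1.
have := @ln_sub_ge _ (1 - xpt eps k.+2) (1 - xpt eps k.+3).
rewrite subr_gt0 hx1 subr_gt0 hx => /(_ isT isT).
rewrite (xptS eps k.+2).
have hd : 0 < 1 - xpt eps k.+2 by rewrite subr_gt0.
have -> : 1 - (1 - (xpt eps k.+2 + eps)) / (1 - xpt eps k.+2) = eps / (1 - xpt eps k.+2).
  by field; lra.
lra.
Qed.

Lemma ceil_le1 (R : realType) (z : R) : (Num.ceil z)%:~R <= z + 1.
Proof. have := ceilB1_lt z; rewrite rmorphB /=; lra. Qed.

Lemma floor_ge1 (R : realType) (z : R) : z - 1 <= (Num.floor z)%:~R.
Proof. have := floorD1_gt z; rewrite rmorphD /=; lra. Qed.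

Lemma wfacts (R : realType) (w al : R) :
  w <= -1 -> w * expR w = - 2 / expR 3 -> al = 1 - (w + 1)^-1 ->
  exists y : R, [/\ 0 < y, y < 1/2, al^-1 = 1 - y, al * (1 - y) = 1
                  & ln y = 3 - ln 2 - y^-1].
Proof.
move=> hw hwe hal.
have e3 : 0 < expR 3 :> R by exact: expR_gt0.
have hw1 : w < -1.
  rewrite lt_neqAle hw andbT; apply/negP => /eqP hw1.
  move: hwe; rewrite hw1 => h.
  have h2 : expR (-1) * expR 3 = 2 :> R.
    have h' : expR (-1) = 2 / expR 3 :> R by lra.
    by rewrite h' mulfVK ?gt_eqF.
  have : 1 + 2 <= expR 2 :> R by exact: expR_ge1Dx.
  have -> : expR 2 = expR (-1) * expR 3 :> R.
    by rewrite -expRD; congr expR; ring.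
  rewrite h2; lra.
pose u := - w.
have hu1 : 1 < u by rewrite /u; lra.
have hu0 : 0 < u by lra.
have hue : u * expR (- u) = 2 / expR 3.
  by rewrite /u opprK mulNr hwe mulNr opprK.
have hln : ln u - u = ln 2 - 3.
  have := congr1 (@ln R) hue.
  rewrite lnM ?posrE ?expR_gt0 // expRK ln_div ?posrE ?expR_gt0 // expRK.
  lra.
have ln2 : ln 2 <= 1 :> R.
  have : (2 : R) <= expR 1 by have := expR_ge1Dx (1 : R); lra.
  move=> h; apply: (@le_trans _ _ (ln (expR 1))); last by rewrite expRK.
  by rewrite ler_ln ?posrE ?expR_gt0.
have lnu : 0 < ln u by exact: ln_gt0.
have hw0 : w != 0 by rewrite (lt_eqF (_ : w < 0)) //; lra.
have hw10 : w + 1 != 0 by rewrite (lt_eqF (_ : w + 1 < 0)) //; lra.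
exists u^-1; split.
- by rewrite invr_gt0.
- rewrite mul1r ltf_pV2 ?posrE //; lra.
- by rewrite hal /u; field; rewrite hw0 hw10.
- by rewrite hal /u; field; rewrite hw0 hw10.
- rewrite lnV ?posrE // invrK; lra.
Qed.

Lemma getK (R : realType) (al eps y : R) (B : nat) : 0 < eps -> 0 < y ->
  al^-1 = 1 - y -> eps <= 1/2 - y -> eps^-1 <= B%:R ->
  exists K, [/\ forall i, inS al eps i = (0 < i <= K)%N, (0 < K)%N, (K < B)%N,
               xpt eps K <= 1 - y & 1 - y < xpt eps K.+1].
Proof.
move=> he hy hal he2 hB.
have hBe : 1 <= B%:R * eps.
  by have := ler_wpM2r (ltW he) hB; rewrite mulVf ?gt_eqF.
pose P := fun i => xpt eps i <= al^-1.
have hP1 : P 1%N by rewrite /P /xpt hal mul1r; lra.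
have hPlt : forall i, P i -> (i < B)%N.
  move=> i; rewrite /P /xpt hal => h.
  rewrite -(@ltr_nat R) -(@ltr_pM2r _ eps) //; lra.
have hPB : forall i, P i -> (i <= B)%N by move=> i /hPlt /ltnW.
case: (ex_maxnP (ex_intro _ 1%N hP1) hPB) => K hPK hmax.
exists K; split.
- move=> i; rewrite /inS; case: (posnP i) => [->|hi] //=.
  apply/idP/idP; first exact: hmax.
  by move=> hiK; apply: le_trans hPK; apply: xpt_mono => //; exact: ltW.
- exact: hmax 1%N hP1.
- exact: hPlt.
- by move: hPK; rewrite /P hal.
- rewrite ltNge; apply/negP => h.
  have : P K.+1 by rewrite /P hal.
  by move/hmax; rewrite ltnn.
Qed.

Lemma TT_bounds (R : realType) (B : nat) (c : R) : (0 < B)%N -> 0 < c ->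
  B%:R - 1 <= TT B c <= B%:R.
Proof.
move=> hB hc; rewrite /TT.
have hB1 : (1 : R) <= B%:R by rewrite ler1n.
have hp : 1 <= B%:R `^ c.
  by have := ler_powR hB1 (ltW hc); rewrite powRr0.
have hi : 0 <= (B%:R `^ c)^-1 by rewrite invr_ge0 powR_ge0.
have hi1 : (B%:R `^ c)^-1 <= 1 by rewrite invf_le1 // (lt_le_trans ltr01 hp).
apply/andP; split; lra.
Qed.

Lemma ln_half (R : realType) : ln (1/2 : R) = - ln 2.
Proof. by rewrite mul1r lnV ?posrE. Qed.

Lemma wtK (R : realType) (eps : R) K : (0 < K)%N -> wt eps K = 1 - xpt eps K.
Proof. by rewrite /wt; case: K. Qed.

Lemma sum_zz (R : realType) (eps : R) B K (c0 : R) :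
  \sum_(0 <= k < K) (c0 * zz eps B k.+1) * (wt eps k - wt eps k.+1)
  = c0 * B%:R * QQ eps K.
Proof.
rewrite /QQ mulr_sumr; apply: eq_bigr => k _; rewrite /zz; ring.
Qed.

Lemma HH_upper (R : realType) (eps : R) B K (a : R) : 0 <= a -> 0 < eps ->
  xpt eps K < 1 ->
  HH eps B K a <= (a - 1) * B%:R * QQ eps K + (a + 1) * (1 - wt eps K)
                  + a * B%:R * wt eps K.
Proof.
move=> ha he hx; rewrite /HH lerD2r -sum_zz -tel_wt mulr_sumr -big_split /=.
apply: ler_sum_nat => k /andP[_ hk].
rewrite -mulrDl; apply: ler_wpM2r; first exact: dwt_ge0.
apply: le_trans (MM_le_U eps B a (_ : (k < k.+1 <= K)%N)) _; first by rewrite ltnSn.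
rewrite /UU; have := ceil_le1 (zz eps B k.+1); have := floor_ge1 (zz eps B k.+1).
move=> h1 h2; have := ler_wpM2l ha h2; lra.
Qed.

Lemma HH_ge (R : realType) (eps : R) B K (a : R) (g : nat -> R) : 0 < eps ->
  (forall k, (k < K)%N -> g k <= MM eps B K a k) ->
  \sum_(0 <= k < K) g k * (wt eps k - wt eps k.+1) + a * B%:R * wt eps K
  <= HH eps B K a.
Proof.
move=> he hg; rewrite /HH lerD2r; apply: ler_sum_nat => k /andP[_ hk].
by apply: ler_wpM2r; [exact: dwt_ge0 | exact: hg].
Qed.

Lemma QQ_ge0 (R : realType) (eps : R) K : 0 < eps -> xpt eps K < 1 -> 0 <= QQ eps K.
Proof.
move=> he hx; rewrite /QQ big_nat_cond; apply: sumr_ge0 => k /andP[/andP[_ hk] _].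
apply: divr_ge0; first exact: dwt_ge0.
rewrite subr_ge0; apply: ltW; apply: le_lt_trans hx; exact: xpt_mono (ltW he) hk.
Qed.

Lemma lower (R : realType) (al eps y : R) (B K : nat) (c a : R) :
  0 < y -> y < 1/2 -> al * (1 - y) = 1 -> ln y = 3 - ln 2 - y^-1 ->
  0 < eps -> eps <= (1/2 - y) * y / 4 -> 1 <= B%:R * eps ->
  (0 < K)%N -> xpt eps K <= 1 - y -> 1 - y < xpt eps K.+1 -> 0 < c ->
  cond eps B K c a -> al - 36 * eps <= a.
Proof.
move=> hy0 hy2 hal1 hly he he0 hBe hK0 hxK hxK1 hc [h0 hT].
have hB : (0 < B)%N.
  by rewrite lt0n; apply/eqP => hB0; move: hBe; rewrite hB0 mul0r; lra.
have hBr : (0:R) < B%:R by rewrite ltr0n.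
have ha0 : 0 <= a.
  by have := le_trans h0 (MM_le_b eps B K a 0%N); rewrite pmulr_lge0.
have /andP[hTl _] := TT_bounds hB hc.
pose t := y^-1.
have hyt : y * t = 1 by rewrite /t mulfV ?gt_eqF.
have ht0 : 0 < t by rewrite /t invr_gt0.
have ht2 : 2 < t by nra.
have he64 : eps <= 1/64 by have := sqr_ge0 (y - 1/4); nra.
have hey : eps <= y / 2 by nra.
have he2 : eps <= (1/2 - y) / 2 by nra.
have het : eps * t <= 1/2.
  have := ler_wpM2r (ltW ht0) hey; rewrite mulrAC hyt; lra.
have hxS := xptS eps K.
pose z := 1 - xpt eps K.+1.
have hwK : wt eps K = z + eps by rewrite wtK // /z hxS; ring.
have hz1 : z < y by rewrite /z; lra.
have hz2 : y - eps <= z by rewrite /z hxS; lra.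
have hz0 : 0 < z by lra.
have hxK1' : xpt eps K < 1 by lra.
have hHu := @HH_upper R eps B K a ha0 he hxK1'.
have hQ0 := @QQ_ge0 R eps K he hxK1'.
rewrite hwK in hHu.
have hal2 : al < 2 by nra.
have hal0 : 1 < al by nra.
case: (leP al a) => [hala|hlt]; first by lra.
case: (ltP a 1) => ha1.
  exfalso.
  have p1 : 0 <= (1 - a) * B%:R * QQ eps K by rewrite !mulr_ge0 //; lra.
  have p2 : 0 <= (a + 1) * (z + eps) by rewrite mulr_ge0 //; lra.
  have p3 : 0 <= (1 - a) * B%:R * (z + eps) by rewrite !mulr_ge0 //; lra.
  have p4 : 0 <= B%:R * (1/2 - z - eps) by rewrite mulr_ge0 //; lra.
  have p5 : 0 <= B%:R * (1/64 - eps) by rewrite mulr_ge0 //; lra.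
  lra.
have hQu : QQ eps K <= xpt eps 1 / (1 - xpt eps 1) + ln (1 - xpt eps 1) - ln z.
  have := @Qup R eps K.-1 he; rewrite prednK //; move=> h; apply: h; lra.
have hx1 : xpt eps 1 = 1/2 + eps by rewrite /xpt; ring.
rewrite hx1 in hQu.
have hl1 : ln (1 - (1/2 + eps)) <= - ln 2.
  rewrite -ln_half ler_ln ?posrE; lra.
have hl2 := @ln_sub_le R y z hy0 hz0.
have hq1 : (1/2 + eps) / (1 - (1/2 + eps)) <= 1 + 8 * eps.
  rewrite ler_pdivrMr; last lra.
  nra.
have hq2 : y / z <= 1 + 2 * eps * t.
  rewrite ler_pdivrMr //.
  have q1 : 0 <= (1 + 2 * eps * t) * (z - (y - eps)).
    rewrite mulr_ge0 //; last lra.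
    have : 0 <= eps * t by rewrite mulr_ge0 //; lra.
    lra.
  have q2 : 0 <= eps * (1 - 2 * eps * t) by rewrite mulr_ge0 //; lra.
  have q3 : eps * t * y = eps by rewrite -mulrA [t * y]mulrC hyt mulr1.
  nra.
have hQ : QQ eps K <= t - 2 + 8 * eps + 2 * eps * t.
  have hly2 : ln y = 3 - ln 2 - t by rewrite hly.
  lra.
have hat : al * t = t + al.
  have : al * (1 - y) * t = t by rewrite hal1 mul1r.
  rewrite mulrBr mulr1 mulrBl -mulrA hyt mulr1 => h; lra.
have hid : (al - 1) * (t - 2) + al * y = 1 by lra.
have r1 : 0 <= (a - 1) * B%:R * ((t - 2 + 8 * eps + 2 * eps * t) - QQ eps K).
  by rewrite !mulr_ge0 //; lra.
have r2 : 0 <= a * B%:R * (y - z) by rewrite !mulr_ge0 //; lra.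
have r3 : 0 <= (a + 1) * (z + eps) by rewrite !mulr_ge0 //; lra.
have r4 : 0 <= (a + 1) * (B%:R * eps - 1) by rewrite !mulr_ge0 //; lra.
have key : B%:R * (1 - eps) <= B%:R * ((a - 1) * (t - 2) + (a - 1) * (8 * eps + 2 * eps * t)
             + (a + 1) * eps + a * y + a * eps).
  lra.
rewrite ler_pM2l // in key.
have s1 : 0 <= eps * (8 + 2 * t) * (2 - a) by rewrite !mulr_ge0 //; lra.
have s2 : 0 <= eps * (2 - a) by rewrite !mulr_ge0 //; lra.
have k2 : (al - a) * (t - 2 + y) <= eps * (14 + 2 * t) by lra.
have hf : 0 <= 3/4 * t - 2 + y.
  have : 0 <= y * (3/4 * t - 2 + y).
    have -> : y * (3/4 * t - 2 + y) = 3/4 * (y * t) - 2 * y + y * y by ring.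
    rewrite hyt.
    have : 0 <= (1/2 - y) * (3/2 - y) by rewrite mulr_ge0 //; lra.
    lra.
  by rewrite pmulr_rge0.
have s3 : 0 <= (al - a) * (3/4 * t - 2 + y) by rewrite mulr_ge0 //; lra.
have s4 : 0 <= eps * (t - 2) by rewrite mulr_ge0 //; lra.
have : 0 <= t * (36 * eps - (al - a)) by lra.
rewrite pmulr_rge0 //; lra.
Qed.

Lemma zz_le (R : realType) (eps : R) B i j : 0 < eps -> xpt eps j < 1 -> (i <= j)%N ->
  zz eps B i <= zz eps B j.
Proof.
move=> he hj hij; rewrite /zz; apply: ler_wpM2l => //.
have hi : xpt eps i < 1 by apply: le_lt_trans hj; apply: xpt_mono => //; exact: ltW.
rewrite lef_pV2 ?posrE ?subr_gt0 //.
by rewrite lerD2l lerN2 xpt_mono // ltW.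
Qed.

Lemma zz_bound (R : realType) (eps y : R) B j : 0 < y -> y <= 1 - xpt eps j ->
  0 <= zz eps B j <= B%:R * y^-1.
Proof.
move=> hy hj; have hd : 0 < 1 - xpt eps j by exact: (lt_le_trans hy hj).
rewrite /zz; apply/andP; split; first by rewrite divr_ge0 // ltW.
by apply: ler_wpM2l => //; rewrite lef_pV2 ?posrE.
Qed.

Lemma upper (R : realType) (al eps y : R) (B K : nat) (c C' : R) :
  0 < y -> y < 1/2 -> al * (1 - y) = 1 -> ln y = 3 - ln 2 - y^-1 ->
  0 < eps -> eps <= (1/2 - y) * y / 4 -> 1 <= B%:R * eps ->
  (0 < K)%N -> xpt eps K <= 1 - y -> 1 - y < xpt eps K.+1 -> 0 < c ->
  4 + y^-1 <= C' * y -> cond eps B K c (al + C' * eps).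
Proof.
move=> hy0 hy2 hal1 hly he he0 hBe hK0 hxK hxK1 hc hC.
have hB : (0 < B)%N.
  by rewrite lt0n; apply/eqP => hB0; move: hBe; rewrite hB0 mul0r; lra.
have hBr : (0:R) < B%:R by rewrite ltr0n.
have /andP[_ hTu] := TT_bounds hB hc.
pose t := y^-1.
have hyt : y * t = 1 by rewrite /t mulfV ?gt_eqF.
rewrite -/t in hC.
have ht0 : 0 < t by rewrite /t invr_gt0.
have ht2 : 2 < t by nra.
have he64 : eps <= 1/64 by have := sqr_ge0 (y - 1/4); nra.
have hey : eps <= y / 2 by nra.
have he2 : eps <= (1/2 - y) / 2 by nra.
have hxS := xptS eps K.
have hal2 : al < 2 by nra.
have hal0 : 1 < al by nra.
have hat : al * t = t + al.
  have : al * (1 - y) * t = t by rewrite hal1 mul1r.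
  rewrite mulrBr mulr1 mulrBl -mulrA hyt mulr1 => h; lra.
have hC0 : 0 < C'.
  have : 0 < C' * y by lra.
  by rewrite pmulr_lgt0.
have hCe : 0 <= C' * eps by rewrite mulr_ge0 // ltW.
have hxK1' : xpt eps K < 1 by lra.
have hxj : forall j, (j <= K)%N -> y <= 1 - xpt eps j.
  move=> j hj; have := @xpt_mono R eps j K (ltW he) hj; lra.
pose L := fun k => (al - 1) * zz eps B k.+1.
have hL : forall k, (k < K)%N -> L k <= MM eps B K (al + C' * eps) k.
  move=> k hk; apply: MM_glb; first exact: ltnW.
    have /andP[z0 z1] := @zz_bound R eps y B k.+1 hy0 (hxj _ hk).
    rewrite /L; rewrite -/t in z1.
    have q1 : (al - 1) * zz eps B k.+1 <= (al - 1) * (B%:R * t).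
      by rewrite ler_wpM2l //; lra.
    have q2 : (al - 1) * (B%:R * t) = al * B%:R.
      by rewrite mulrCA mulrBl hat mul1r; ring.
    have q3 : 0 <= C' * eps * B%:R by rewrite mulr_ge0 // ltW.
    lra.
  move=> j /andP[hkj hjK].
  have /andP[z0 z1] := @zz_bound R eps y B j hy0 (hxj _ hjK).
  have hzj := @zz_le R eps B k.+1 j he (le_lt_trans (@xpt_mono R eps j K (ltW he) hjK) hxK1') hkj.
  rewrite /L /UU.
  have hc1 := ceil_ge (zz eps B j).
  have hf1 := floor_le (zz eps B j).
  have q1 : 0 <= (al - 1) * ((Num.ceil (zz eps B j))%:~R - zz eps B j) by rewrite mulr_ge0 //; lra.
  have q2 : 0 <= C' * eps * (Num.ceil (zz eps B j))%:~R by rewrite mulr_ge0 //; lra.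
  have q3 : 0 <= (al - 1) * (zz eps B j - zz eps B k.+1) by rewrite mulr_ge0 //; lra.
  lra.
split.
  apply: le_trans (hL 0%N hK0); rewrite /L mulr_ge0 //; first lra.
  by have /andP[] := @zz_bound R eps y B 1 hy0 (hxj _ hK0).
apply: le_trans hTu _.
apply: le_trans (@HH_ge R eps B K (al + C' * eps) L he hL).
rewrite /L sum_zz.
have hQl : xpt eps 1 / (1 - xpt eps 1) + ln (1 - xpt eps 1) - ln (1 - xpt eps K) <= QQ eps K.
  by have := @Qlo R eps K.-1 he; rewrite prednK //; apply.
have hx1 : xpt eps 1 = 1/2 + eps by rewrite /xpt; ring.
rewrite hx1 in hQl.
have hq1 : 1 <= (1/2 + eps) / (1 - (1/2 + eps)).
  by rewrite ler_pdivlMr; lra.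
have hl1 := @ln_sub_ge R (1 - (1/2 + eps)) (1/2) ltac:(lra) ltac:(lra).
rewrite ln_half in hl1.
have hq2 : 1/2 / (1 - (1/2 + eps)) <= 1 + 4 * eps.
  rewrite ler_pdivrMr; last lra.
  have : 0 <= eps * (1 - 4 * eps) by rewrite mulr_ge0 //; lra.
  lra.
have hwK : wt eps K = 1 - xpt eps K by rewrite wtK.
rewrite hwK.
have hw1 : y <= 1 - xpt eps K by lra.
have hw2 : 1 - xpt eps K < y + eps by lra.
have hl2 := @ln_sub_le R (1 - xpt eps K) y ltac:(lra) hy0.
have hq3 : (1 - xpt eps K) / y <= 1 + eps * t.
  rewrite /t; have : 0 <= t * (y + eps - (1 - xpt eps K)) by rewrite mulr_ge0 //; lra.
  rewrite /t; have := hyt; rewrite /t => hyt'.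
  nra.
have hly2 : ln y = 3 - ln 2 - t by rewrite hly.
have hQ : t - 2 - 4 * eps - eps * t <= QQ eps K by lra.
have r1 : 0 <= (al - 1) * B%:R * (QQ eps K - (t - 2 - 4 * eps - eps * t)).
  by rewrite !mulr_ge0 //; lra.
have r2 : 0 <= (al + C' * eps) * B%:R * ((1 - xpt eps K) - y).
  by rewrite !mulr_ge0 //; lra.
have r3 : 0 <= B%:R * eps * (C' * y - (4 + t)) by rewrite !mulr_ge0 //; lra.
have r4 : 0 <= B%:R * eps * (2 - al) * (4 + t) by rewrite !mulr_ge0 //; lra.
have hid : (al - 1) * (t - 2) + al * y = 1 by lra.
have r5 : B%:R * ((al - 1) * (t - 2) + al * y) = B%:R by rewrite hid mulr1.
lra.
Qed.

Unset Implicit Arguments.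

Theorem lemma2p2 (R : realType) (w al : R)
    (hw : w <= -1) (hwe : w * expR w = - 2 / expR 3)
    (hal : al = 1 - (w + 1)^-1) :
  exists C : R, 0 < C /\ exists eps0 : R, 0 < eps0 /\
  forall eps : R, 0 < eps -> eps <= eps0 ->
  forall B : nat, eps^-1 <= B%:R ->
  forall c : R, 0 < c ->
  exists v : R, LP_opt al eps B c v /\ al - C * eps <= v /\ v <= al + C * eps.
Proof.
have [y [hy0 hy2 hali hal1 hly]] := wfacts hw hwe hal.
pose t := y^-1.
have ht0 : 0 < t by rewrite /t invr_gt0.
exists (36 + (4 + t) * t); split.
  by apply: addr_gt0 => //; apply: mulr_gt0 => //; lra.
exists ((1/2 - y) * y / 4); split.
  by apply: divr_gt0 => //; apply: mulr_gt0 => //; lra.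
move=> eps he he0 B hB c hc.
have he2 : eps <= 1/2 - y by nra.
have [K [hS hK0 hKB hxK hxK1]] := getK he hy0 hali he2 hB.
have hBe : 1 <= B%:R * eps.
  by have := ler_wpM2r (ltW he) hB; rewrite mulVf ?gt_eqF.
have hyt : y * t = 1 by rewrite /t mulfV ?gt_eqF.
have hupc : cond eps B K c (al + ((4 + t) * t) * eps).
  apply: (upper hy0 hy2 hal1 hly he he0 hBe hK0 hxK hxK1 hc).
  rewrite -/t -mulrA [t * y]mulrC hyt mulr1; lra.
have hxK1' : xpt eps K <= 1 by lra.
have hBr : (0 : R) <= B%:R by [].
pose S := B%:R * t + 1 + B%:R.
have hBt : 0 <= B%:R * t by rewrite mulr_ge0 // ltW.
have hSp : 0 < S by rewrite /S; lra.
have hBS : B%:R <= S by rewrite /S; lra.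
have hCj : forall j, (0 < j <= K)%N -> (Num.ceil (zz eps B j))%:~R <= S.
  move=> j /andP[_ hjK].
  have hj : y <= 1 - xpt eps j by have := @xpt_mono R eps j K (ltW he) hjK; lra.
  have /andP[_ z1] := @zz_bound R eps y B j hy0 hj.
  have := ceil_le1 (zz eps B j); rewrite /S -/t in z1 *; lra.
have [v [hopt hlb]] := attain he hS hKB hxK1' hSp hBS hCj (ex_intro _ _ hupc).
exists v; split => //.
have [[N0 [N hf]] _] := hopt.
have cv := feas_cond he hS hKB hxK1' hf.
have hlo := lower hy0 hy2 hal1 hly he he0 hBe hK0 hxK hxK1 hc cv.
have hup := hlb _ hupc.
split.
  have : 0 <= (4 + t) * t * eps by rewrite !mulr_ge0 //; lra.
  lra.
lra.
Qed.
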